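(* Let $\mathcal S$ be a fundamental system and $G\subset\mathrm{Homeo}_+([0,1])$ the group generated by the elements of $\mathcal S$. Then $G$ is without linked fixed points and totally rational.
   Context: A homeomorphism $f$ of $[0,1]$ is simple if $[0,1]\setminus\mathrm{Fix}(f)$ has exactly one connected component; its closure is the support $S_f$ of $f$. It is positive if $f(x)\ge x$ for all $x$. A fundamental domain of a simple $f$ is a segment $[x,f(x)]$ with $x$ in the interior of $S_f$. A fundamental system is a family $\mathcal S$ of triples $(f,S_f,I_f)$ such that each $f$ is a simple positive homeomorphism of $[0,1]$, $S_f$ is its support and $I_f\subset S_f$ is a fundamental domain of $f$, and for any two distinct triples in $\mathcal S$: either $S_f$ and $S_g$ have disjoint interiors, or $S_f\subset I_g$, or $S_g\subset I_f$. For a group $G$ of homeomorphisms of $[0,1]$, a pair of successive fixed points is a pair $\{a,b\}$, $a<b$, such that $(a,b)$ is a connected component of $[0,1]\setminus \mathrm{Fix}(g)$ for some $g\in G$; two pairs $\{a,b\},\{c,d\}$ are linked if $(a,b)\cap\{c,d\}$ or $(c,d)\cap\{a,b\}$ consists of exactly one point; $G$ is without linked fixed points if no two such pairs are linked. For such $G$ and a pair $\{a,b\}$, $G_{[a,b]}$ is the stabilizer of $[a,b]$, and the relative translation number $\tau_{a,b}:G_{[a,b]}\to\mathbb R$ is a group morphism whose kernel is the set of elements having a fixed point in $(a,b)$ and which is positive exactly at elements $g$ with $g(x)>x$ on $(a,b)$ (it exists and is unique up to a positive factor). $G$ is totally rational if for every pair $\{a,b\}$ of successive fixed points, $\tau_{a,b}(G_{[a,b]})$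 is a cyclic subgroup $\alpha\mathbb Z$ of $\mathbb R$. *)

(* Defs.v *)
From Stdlib Require Import Reals ZArith.
Open Scope R_scope.

(* Homeomorphisms of [0,1] are represented by functions R -> R; only their
   values on [0,1] matter. *)
Definition I01 (x : R) : Prop := 0 <= x <= 1.

Definition cont01 (f : R -> R) : Prop :=
  forall x, I01 x -> forall eps, eps > 0 ->
    exists delta, delta > 0 /\
      forall y, I01 y -> Rabs (y - x) < delta -> Rabs (f y - f x) < eps.

Definition homeo01 (f : R -> R) : Prop :=
  (forall x, I01 x -> I01 (f x)) /\ cont01 f /\
  exists g : R -> R,
    (forall x, I01 x -> I01 (g x)) /\ cont01 g /\
    (forall x, I01 x -> g (f x) = x) /\ (forall x, I01 x -> f (g x) = x).

Definition positive01 (f : R -> R) : Prop := forall x, I01 x -> x <= f x.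

(* f is simple and its support is [p,q]: [0,1] \ Fix(f) is the single
   connected component (p,q). *)
Definition simple_with_support (f : R -> R) (p q : R) : Prop :=
  0 <= p /\ p < q /\ q <= 1 /\
  forall x, I01 x -> (f x <> x <-> p < x < q).

(* A fundamental system, indexed by I: the triple number i is
   (f i, S = [p i, q i], I_f = [u i, f i (u i)]) with u i in the interior
   of the support. *)
Definition fundamental_system {I : Type} (f : I -> R -> R) (p q u : I -> R)
  : Prop :=
  (forall i, homeo01 (f i) /\ positive01 (f i) /\
             simple_with_support (f i) (p i) (q i) /\ p i < u i < q i) /\
  (forall i j,
     ((exists x, I01 x /\ f i x <> f j x) \/ u i <> u j) ->
     (forall x, ~ (p i < x < q i /\ p j < x < q j)) \/
     (forall x, p i <= x <= q i -> u j <= x <= f j (u j)) \/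
     (forall x, p j <= x <= q j -> u i <= x <= f i (u i))).

Inductive in_gen {I : Type} (f : I -> R -> R) : (R -> R) -> Prop :=
| gen_id (h : R -> R) :
    (forall x, I01 x -> h x = x) -> in_gen f h
| gen_mul (i : I) (g h : R -> R) :
    in_gen f g -> (forall x, I01 x -> h x = f i (g x)) -> in_gen f h
| gen_inv (i : I) (g h : R -> R) :
    in_gen f g -> (forall x, I01 x -> I01 (h x) /\ f i (h x) = g x) ->
    in_gen f h.

Definition succ_fixed (G : (R -> R) -> Prop) (a b : R) : Prop :=
  exists g, G g /\ 0 <= a /\ a < b /\ b <= 1 /\ g a = a /\ g b = b /\
    forall x, a < x < b -> g x <> x.

Definition exactly_one (P Q : Prop) : Prop := (P /\ ~ Q) \/ (~ P /\ Q).

Definition linked (a b c d : R) : Prop :=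
  exactly_one (a < c < b) (a < d < b) \/ exactly_one (c < a < d) (c < b < d).

Definition without_linked_fixed_points (G : (R -> R) -> Prop) : Prop :=
  forall a b c d, succ_fixed G a b -> succ_fixed G c d -> ~ linked a b c d.

Definition stab (G : (R -> R) -> Prop) (a b : R) (g : R -> R) : Prop :=
  G g /\ (forall x, a <= x <= b -> a <= g x <= b) /\
  (forall y, a <= y <= b -> exists x, a <= x <= b /\ g x = y).

Definition rel_translation (G : (R -> R) -> Prop) (a b : R)
  (tau : (R -> R) -> R) : Prop :=
  (forall g h k, stab G a b g -> stab G a b h -> stab G a b k ->
     (forall x, I01 x -> k x = g (h x)) -> tau k = tau g + tau h) /\
  (forall g, stab G a b g -> (tau g = 0 <-> exists x, a < x < b /\ g x = x)) /\
  (forall g, stab G a b g -> (0 < tau g <-> forall x, a < x < b -> x < g x)).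

Definition totally_rational (G : (R -> R) -> Prop) : Prop :=
  forall a b, succ_fixed G a b ->
    (exists tau, rel_translation G a b tau) /\
    (forall tau, rel_translation G a b tau ->
       exists alpha : R, forall y,
         (exists g, stab G a b g /\ tau g = y) <-> exists n : Z, y = alpha * IZR n).

(* Main.v *)
Require Import Defs.
From Stdlib Require Import Reals ZArith Lra Lia List Classical ClassicalEpsilon FunctionalExtensionality.
Open Scope R_scope.

Definition good (h : R -> R) : Prop :=
  (forall x, I01 x -> I01 (h x)) /\
  (forall x y, I01 x -> I01 y -> x < y -> h x < h y) /\
  (forall y, I01 y -> exists x, I01 x /\ h x = y).

Lemma good_I01 h x : good h -> I01 x -> I01 (h x).
Proof. intros [H _] Hx; auto. Qed.

Lemma good_lt h x y : good h -> I01 x -> I01 y -> x < y -> h x < h y.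
Proof. intros [_ [H _]]; auto. Qed.

Lemma good_le h x y : good h -> I01 x -> I01 y -> x <= y -> h x <= h y.
Proof. intros G Hx Hy [Hl|He]. left; apply good_lt; auto. subst; lra. Qed.

Lemma good_lt_rev h x y : good h -> I01 x -> I01 y -> h x < h y -> x < y.
Proof.
  intros G Hx Hy H. destruct (Rlt_or_le x y) as [|Hle]; auto.
  apply (good_le h) in Hle; auto. lra.
Qed.

Lemma good_le_rev h x y : good h -> I01 x -> I01 y -> h x <= h y -> x <= y.
Proof.
  intros G Hx Hy H. destruct (Rle_or_lt x y) as [|Hlt]; auto.
  apply (good_lt h) in Hlt; auto. lra.
Qed.

Lemma good_inj h x y : good h -> I01 x -> I01 y -> h x = h y -> x = y.
Proof.
  intros G Hx Hy H. apply Rle_antisym; apply (good_le_rev h); auto; lra.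
Qed.

Lemma good_id : good (fun x => x).
Proof. split; [|split]; auto. intros y Hy; exists y; auto. Qed.

Lemma good_comp g h : good g -> good h -> good (fun x => g (h x)).
Proof.
  intros Gg Gh. split; [|split].
  - intros; apply good_I01; auto; apply good_I01; auto.
  - intros; apply good_lt; auto using good_I01; apply good_lt; auto.
  - intros y Hy. destruct Gg as [_ [_ Sg]]. destruct (Sg y Hy) as [z [Hz Ez]].
    destruct Gh as [_ [_ Sh]]. destruct (Sh z Hz) as [x [Hx Ex]].
    exists x; split; auto; congruence.
Qed.

Lemma good_ext g h : good g -> (forall x, I01 x -> h x = g x) -> good h.
Proof.
  intros [G1 [G2 G3]] E. split; [|split].
  - intros; rewrite E; auto.
  - intros; rewrite !E; auto.
  - intros y Hy; destruct (G3 y Hy) as [x [Hx Ex]]; exists x; rewrite E; auto.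
Qed.

Definition inv (h : R -> R) (y : R) : R :=
  epsilon (inhabits 0) (fun x => I01 x /\ h x = y).

Lemma inv_spec h y : good h -> I01 y -> I01 (inv h y) /\ h (inv h y) = y.
Proof.
  intros [_ [_ S]] Hy. unfold inv. apply epsilon_spec. apply S; auto.
Qed.

Lemma inv_r h y : good h -> I01 y -> h (inv h y) = y.
Proof. intros; apply inv_spec; auto. Qed.

Lemma inv_I01 h y : good h -> I01 y -> I01 (inv h y).
Proof. intros; apply inv_spec; auto. Qed.

Lemma inv_l h x : good h -> I01 x -> inv h (h x) = x.
Proof.
  intros G Hx. apply (good_inj h); auto. apply inv_I01; auto; apply good_I01; auto.
  apply inv_r; auto; apply good_I01; auto.
Qed.

Lemma inv_unique h x y : good h -> I01 x -> h x = y -> inv h y = x.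
Proof. intros G Hx E; subst; apply inv_l; auto. Qed.

Lemma good_inv h : good h -> good (inv h).
Proof.
  intros G. split; [|split].
  - intros; apply inv_I01; auto.
  - intros x y Hx Hy Hxy. apply (good_lt_rev h); auto using inv_I01.
    rewrite !inv_r; auto.
  - intros y Hy. exists (h y). split. apply good_I01; auto. apply inv_l; auto.
Qed.

Lemma iter_good h n : good h -> good (Nat.iter n h).
Proof.
  intros G; induction n; simpl. apply good_id.
  apply (good_ext (fun x => h (Nat.iter n h x))). apply good_comp; auto.
  intros; reflexivity.
Qed.

Definition Fz (h : R -> R) (k : Z) : R -> R :=
  if Z.leb 0 k then Nat.iter (Z.to_nat k) h else Nat.iter (Z.to_nat (- k)) (inv h).

Lemma Fz_good h k : good h -> good (Fz h k).
Proof.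
  intros G; unfold Fz; destruct (Z.leb 0 k); apply iter_good; auto using good_inv.
Qed.

Lemma Fz_I01 h k x : good h -> I01 x -> I01 (Fz h k x).
Proof. intros; apply good_I01; auto using Fz_good. Qed.

Lemma Fz_0 h x : Fz h 0 x = x.
Proof. reflexivity. Qed.

Lemma Fz_1 h x : Fz h 1 x = h x.
Proof. reflexivity. Qed.

Lemma Fz_m1 h x : Fz h (-1) x = inv h x.
Proof. reflexivity. Qed.

Lemma Fz_succ h k x : good h -> I01 x -> Fz h (k+1) x = h (Fz h k x).
Proof.
  intros G Hx. unfold Fz.
  destruct (Z.leb_spec 0 k) as [Hk|Hk].
  - destruct (Z.leb_spec 0 (k+1)) as [_|Hk']; [|lia].
    replace (Z.to_nat (k+1)) with (S (Z.to_nat k)) by lia. reflexivity.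
  - destruct (Z.leb_spec 0 (k+1)) as [Hk'|Hk'].
    + assert (k = -1)%Z by lia. subst. simpl.
      symmetry; apply inv_r; auto.
    + replace (Z.to_nat (- k)) with (S (Z.to_nat (- (k+1)))) by lia.
      simpl. symmetry; apply inv_r; auto.
      apply good_I01; auto. apply iter_good, good_inv; auto.
Qed.

Lemma Fz_pred h k x : good h -> I01 x -> Fz h (k-1) x = inv h (Fz h k x).
Proof.
  intros G Hx. replace k with ((k-1)+1)%Z at 2 by lia.
  rewrite Fz_succ; auto. rewrite inv_l; auto. apply Fz_I01; auto.
Qed.

Lemma Fz_add h a b x : good h -> I01 x -> Fz h (a + b) x = Fz h a (Fz h b x).
Proof.
  intros G. revert x. induction a using Z.peano_ind; intros x Hx.
  - reflexivity.
  - rewrite <- Z.add_1_r. replace (a + 1 + b)%Z with ((a + b) + 1)%Z by lia.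
    rewrite !Fz_succ; auto using Fz_I01. rewrite IHa; auto.
  - rewrite <- Z.sub_1_r. replace (a - 1 + b)%Z with ((a + b) - 1)%Z by lia.
    rewrite !Fz_pred; auto using Fz_I01. rewrite IHa; auto.
Qed.

Lemma Fz_cancel h k x : good h -> I01 x -> Fz h k (Fz h (-k) x) = x.
Proof. intros; rewrite <- Fz_add; auto. replace (k + - k)%Z with 0%Z by lia. reflexivity. Qed.

Lemma Fz_cancel' h k x : good h -> I01 x -> Fz h (-k) (Fz h k x) = x.
Proof. intros; rewrite <- Fz_add; auto. replace (- k + k)%Z with 0%Z by lia. reflexivity. Qed.

Lemma inv_ext h1 h2 y : good h1 -> good h2 -> (forall x, I01 x -> h1 x = h2 x) -> I01 y ->
  inv h1 y = inv h2 y.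
Proof.
  intros G1 G2 E Hy. apply inv_unique; auto using inv_I01.
  rewrite E; auto using inv_I01. apply inv_r; auto.
Qed.

Lemma Fz_ext h1 h2 k x : good h1 -> good h2 -> (forall x, I01 x -> h1 x = h2 x) -> I01 x ->
  Fz h1 k x = Fz h2 k x.
Proof.
  intros G1 G2 E. revert x. induction k using Z.peano_ind; intros x Hx.
  - reflexivity.
  - rewrite <- Z.add_1_r, !Fz_succ, IHk; auto. apply E; auto using Fz_I01.
  - rewrite <- Z.sub_1_r, !Fz_pred, IHk; auto. apply inv_ext; auto using Fz_I01.
Qed.

Lemma Fz_fix h k x : good h -> I01 x -> h x = x -> Fz h k x = x.
Proof.
  intros G Hx E. induction k using Z.peano_ind.
  - reflexivity.
  - rewrite <- Z.add_1_r, Fz_succ, IHk; auto.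
  - rewrite <- Z.sub_1_r, Fz_pred, IHk; auto. apply inv_unique; auto.
Qed.


Definition PS (h : R -> R) (p q : R) : Prop :=
  homeo01 h /\ positive01 h /\ simple_with_support h p q.

Definition clamp (x : R) : R := Rmax 0 (Rmin 1 x).

Lemma clamp_I01 x : I01 (clamp x).
Proof. unfold clamp, I01, Rmax, Rmin. repeat destruct Rle_dec; lra. Qed.

Lemma clamp_id x : I01 x -> clamp x = x.
Proof. unfold clamp, I01, Rmax, Rmin. intros. repeat destruct Rle_dec; lra. Qed.

Lemma clamp_lip x y : Rabs (clamp x - clamp y) <= Rabs (x - y).
Proof.
  unfold clamp, Rmax, Rmin. repeat destruct Rle_dec;
  unfold Rabs; repeat destruct Rcase_abs; lra.
Qed.

Lemma cont_ext h : cont01 h -> continuity (fun x => h (clamp x)).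
Proof.
  intros C x0. unfold continuity_pt, continue_in, limit1_in, limit_in.
  intros eps Heps. destruct (C (clamp x0) (clamp_I01 x0) eps Heps) as [d [Hd Hc]].
  exists d; split; auto. intros x [_ Hx]. simpl in *. unfold R_dist in *.
  apply Hc. apply clamp_I01. eapply Rle_lt_trans. apply clamp_lip. auto.
Qed.

Section PSfacts.
Variables (h : R -> R) (p q : R).
Hypothesis HPS : PS h p q.

Lemma PS_I01 x : I01 x -> I01 (h x).
Proof. destruct HPS as [[H _] _]; auto. Qed.

Lemma PS_inj x y : I01 x -> I01 y -> h x = h y -> x = y.
Proof.
  destruct HPS as [[_ [_ [g [_ [_ [E _]]]]]] _]. intros Hx Hy Hxy.
  rewrite <- (E x Hx), <- (E y Hy), Hxy; auto.
Qed.

Lemma PS_surj y : I01 y -> exists x, I01 x /\ h x = y.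
Proof.
  destruct HPS as [[_ [_ [g [Hg [_ [_ E]]]]]] _]. intros Hy. exists (g y); auto.
Qed.

Lemma PS_one : h 1 = 1.
Proof.
  destruct HPS as [[Hi _] [Hp _]].
  assert (I01 1) by (unfold I01; lra).
  specialize (Hi 1 H); specialize (Hp 1 H). unfold I01 in *; lra.
Qed.

Lemma PS_good : good h.
Proof.
  split; [|split]. exact PS_I01. 2: exact PS_surj.
  intros x y Hx Hy Hxy.
  destruct (Rlt_or_le (h x) (h y)) as [|Hle]; auto. exfalso.
  destruct Hle as [Hlt|Heq].
  2:{ apply PS_inj in Heq; auto. lra. }
  assert (Hy1 : y < 1).
  { destruct (Rlt_or_le y 1); auto. assert (y = 1) by (unfold I01 in Hy; lra). subst.
    rewrite PS_one in Hlt. pose proof (PS_I01 x Hx). unfold I01 in *; lra. }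
  assert (Hx1 : h x < h 1).
  { rewrite PS_one. pose proof (PS_I01 x Hx). destruct (Rlt_or_le (h x) 1); auto.
    assert (h x = h 1) by (rewrite PS_one; unfold I01 in *; lra).
    apply PS_inj in H1; auto. lra. unfold I01; lra. }
  destruct HPS as [[_ [C _]] _].
  assert (Cc : continuity (fun z => h (clamp z) - h x)).
  { apply (continuity_minus (fun z => h (clamp z)) (fun _ => h x)). apply cont_ext; auto.
    apply continuity_const. intros a b; reflexivity. }
  destruct (IVT (fun z => h (clamp z) - h x) y 1 Cc Hy1) as [z [Hz Ez]].
  - simpl. rewrite clamp_id; auto. lra.
  - simpl. rewrite clamp_id. lra. unfold I01; lra.
  - assert (I01 z) by (unfold I01 in *; lra). rewrite clamp_id in Ez; auto.
    assert (z = x) by (apply PS_inj; auto; lra). lra.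
Qed.

Lemma PS_fix x : I01 x -> ~ (p < x < q) -> h x = x.
Proof.
  destruct HPS as [_ [_ [_ [_ [_ S]]]]]. intros Hx Hn.
  destruct (Req_dec (h x) x); auto. exfalso; apply Hn, S; auto.
Qed.

Lemma PS_pq : 0 <= p /\ p < q /\ q <= 1.
Proof. destruct HPS as [_ [_ [A [B [C _]]]]]; auto. Qed.

Lemma PS_mov x : p < x < q -> x < h x.
Proof.
  destruct HPS as [_ [Hp [A [B [C S]]]]]. intros Hx.
  assert (I01 x) by (unfold I01; lra).
  destruct (Hp x H). auto. exfalso. apply (S x H); auto.
Qed.

Lemma PS_in x : p < x < q -> p < h x < q.
Proof.
  intros Hx. pose proof PS_pq. assert (I01 x) by (unfold I01; lra).
  destruct (classic (p < h x < q)) as [|Hn]; auto. exfalso.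
  pose proof (PS_fix (h x) (PS_I01 x H0) Hn).
  apply PS_inj in H1; auto using PS_I01. pose proof (PS_mov x Hx). lra.
Qed.

Lemma PS_inv_in y : p < y < q -> p < inv h y < q.
Proof.
  intros Hy. pose proof PS_pq. assert (I01 y) by (unfold I01; lra).
  pose proof PS_good as G.
  destruct (classic (p < inv h y < q)) as [|Hn]; auto. exfalso.
  pose proof (PS_fix (inv h y) (inv_I01 h y G H0) Hn).
  rewrite inv_r in H1; auto. rewrite <- H1 in Hn. auto.
Qed.

Lemma PS_Fz_in k x : p < x < q -> p < Fz h k x < q.
Proof.
  pose proof PS_pq. pose proof PS_good as G.
  induction k using Z.peano_ind; intros Hx.
  - auto.
  - rewrite <- Z.add_1_r, Fz_succ; auto. apply PS_in; auto. unfold I01; lra.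
  - rewrite <- Z.sub_1_r, Fz_pred; auto. apply PS_inv_in; auto. unfold I01; lra.
Qed.

Lemma PS_Fz_fix k x : I01 x -> ~ (p < x < q) -> Fz h k x = x.
Proof. intros; apply Fz_fix; auto using PS_good, PS_fix. Qed.

Variable u : R.
Hypothesis Hu : p < u < q.

Definition orb (k : Z) : R := Fz h k u.

Lemma orb_in k : p < orb k < q.
Proof. apply PS_Fz_in; auto. Qed.

Lemma orb_step k : orb k < orb (k+1).
Proof.
  unfold orb. rewrite Fz_succ; auto using PS_good.
  apply PS_mov, PS_Fz_in; auto. pose proof PS_pq; unfold I01; lra.
Qed.

Lemma orb_unbounded_up x : x < q -> exists k, x < orb k.
Proof.
  intros Hx. apply NNPP; intros Hn.
  assert (B : forall k, orb k <= x).
  { intros k; destruct (Rle_or_lt (orb k) x); auto. exfalso; apply Hn; eauto. }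
  pose (E := fun y => exists n : nat, y = orb (Z.of_nat n)).
  destruct (completeness E) as [L [HL1 HL2]].
  { exists x. intros y [n ->]. apply B. }
  { exists (orb 0). exists 0%nat; auto. }
  pose proof PS_pq as PQ. pose proof PS_good as G.
  assert (HuL : u <= L) by (apply HL1; exists 0%nat; auto).
  assert (HLx : L <= x) by (apply HL2; intros y [n ->]; apply B).
  assert (HLi : p < L < q) by lra.
  assert (I01 L) by (unfold I01; lra).
  assert (gL : inv h L < L).
  { pose proof (PS_mov _ (PS_inv_in L HLi)). rewrite inv_r in H0; auto. }
  assert (exists n : nat, inv h L < orb (Z.of_nat n)).
  { apply NNPP; intros Hn2. assert (L <= inv h L).
    { apply HL2. intros y [n ->]. destruct (Rle_or_lt (orb (Z.of_nat n)) (inv h L)); auto.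
      exfalso; apply Hn2; eauto. }
    lra. }
  destruct H0 as [n Hn2].
  assert (orb (Z.of_nat (S n)) <= L) by (apply HL1; exists (S n); auto).
  unfold orb in *. rewrite Nat2Z.inj_succ, <- Z.add_1_r, Fz_succ in H0; auto.
  2: unfold I01; lra.
  apply (good_lt h) in Hn2; auto. rewrite inv_r in Hn2; auto. lra.
  apply inv_I01; auto. apply Fz_I01; auto. unfold I01; lra.
Qed.

Lemma orb_unbounded_down x : p < x -> exists k, orb k < x.
Proof.
  intros Hx. apply NNPP; intros Hn.
  assert (B : forall k, x <= orb k).
  { intros k; destruct (Rle_or_lt x (orb k)); auto. exfalso; apply Hn; eauto. }
  pose (E := fun y => exists n : nat, y = - orb (- Z.of_nat n)).
  destruct (completeness E) as [L' [HL1 HL2]].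
  { exists (- x). intros y [n ->]. specialize (B (- Z.of_nat n)%Z). lra. }
  { exists (- orb 0). exists 0%nat; auto. }
  set (M := - L').
  pose proof PS_pq as PQ. pose proof PS_good as G.
  assert (HMu : M <= u).
  { assert (- u <= L') by (apply HL1; exists 0%nat; auto). unfold M; lra. }
  assert (HxM : x <= M).
  { assert (L' <= - x). { apply HL2. intros y [n ->]. specialize (B (- Z.of_nat n)%Z). lra. }
    unfold M; lra. }
  assert (HMi : p < M < q) by lra.
  assert (I01 M) by (unfold I01; lra).
  assert (hM : M < h M) by (apply PS_mov; auto).
  assert (exists n : nat, orb (- Z.of_nat n) < h M).
  { apply NNPP; intros Hn2. assert (- h M >= L').
    { apply Rle_ge, HL2. intros y [n ->]. destruct (Rle_or_lt (h M) (orb (- Z.of_nat n))).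
      lra. exfalso; apply Hn2; eauto. }
    unfold M in *; lra. }
  destruct H0 as [n Hn2].
  assert (- orb (- Z.of_nat (S n)) <= L') by (apply HL1; exists (S n); auto).
  assert (E1 : orb (- Z.of_nat n) = h (orb (- Z.of_nat (S n)))).
  { unfold orb. rewrite <- Fz_succ; auto. f_equal. lia. unfold I01; lra. }
  rewrite E1 in Hn2. apply (good_lt_rev h) in Hn2; auto.
  unfold M in *; lra. apply Fz_I01; auto; unfold I01; lra.
Qed.

Lemma orb_mono j k : (j < k)%Z -> orb j < orb k.
Proof.
  intros H. replace k with (j + Z.of_nat (Z.to_nat (k - j)))%Z by lia.
  assert (0 < Z.to_nat (k - j))%nat by lia.
  induction (Z.to_nat (k - j)). lia.
  destruct n. simpl. replace (j + 1)%Z with (j+1)%Z by lia. apply orb_step.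
  rewrite Nat2Z.inj_succ, <- Z.add_1_r, Z.add_assoc.
  eapply Rlt_trans. apply IHn. lia. apply orb_step.
Qed.

Lemma orb_cofinal x : p < x < q -> exists k, orb k <= x < orb (k+1).
Proof.
  intros Hx. destruct (orb_unbounded_down x) as [k0 H0]; try lra.
  destruct (orb_unbounded_up x) as [k1 H1]; try lra.
  assert (k0 < k1)%Z.
  { destruct (Z.lt_ge_cases k0 k1); auto. destruct (Z.eq_dec k0 k1). subst; lra.
    assert (orb k1 < orb k0) by (apply orb_mono; lia). lra. }
  replace k1 with (k0 + Z.of_nat (Z.to_nat (k1 - k0)))%Z in H1 by lia.
  clear H. apply Rlt_le in H0. revert H1. generalize (Z.to_nat (k1 - k0)) as n. intros n H1. clear k1. revert k0 H0 H1. induction n; intros k0 H0 H1.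
  - rewrite Z.add_0_r in H1. lra.
  - destruct (Rlt_or_le x (orb (k0 + 1))). exists k0; lra.
    apply (IHn (k0+1)%Z); auto. replace (k0 + 1 + Z.of_nat n)%Z with (k0 + Z.of_nat (S n))%Z by lia. auto.
Qed.

End PSfacts.


Section FSys.
Variable I : Type.
Variables (f : I -> R -> R) (p q u : I -> R).
Hypothesis FS : fundamental_system f p q u.

Lemma gPS i : PS (f i) (p i) (q i).
Proof. destruct FS as [H _]. destruct (H i) as [A [B [C _]]]. split; auto. Qed.

Lemma gU i : p i < u i < q i.
Proof. destruct FS as [H _]. apply H. Qed.

Lemma gpq i : 0 <= p i /\ p i < q i /\ q i <= 1.
Proof. apply (PS_pq _ _ _ (gPS i)). Qed.

Lemma fgood i : good (f i).
Proof. apply (PS_good _ _ _ (gPS i)). Qed.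

Lemma Fgood i k : good (Fz (f i) k).
Proof. apply Fz_good, fgood. Qed.

Definition O i k := Fz (f i) k (u i).

Lemma O_0 i : O i 0 = u i.
Proof. reflexivity. Qed.
Lemma O_1 i : O i 1 = f i (u i).
Proof. reflexivity. Qed.

Lemma O_in i k : p i < O i k < q i.
Proof. apply (orb_in _ _ _ (gPS i)), gU. Qed.

Lemma O_mono i j k : (j < k)%Z -> O i j < O i k.
Proof. apply (orb_mono _ _ _ (gPS i)), gU. Qed.

Lemma O_le i j k : (j <= k)%Z -> O i j <= O i k.
Proof. intros H. destruct (Z.eq_dec j k). subst; lra. left; apply O_mono; lia. Qed.

Lemma O_cof i x : p i < x < q i -> exists k, O i k <= x < O i (k+1).
Proof. apply (orb_cofinal _ _ _ (gPS i)), gU. Qed.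

Lemma Ifix i k x : I01 x -> ~ (p i < x < q i) -> Fz (f i) k x = x.
Proof. apply (PS_Fz_fix _ _ _ (gPS i)). Qed.

Lemma f_fix i x : I01 x -> ~ (p i < x < q i) -> f i x = x.
Proof. apply (PS_fix _ _ _ (gPS i)). Qed.

Lemma I01_of a b x : 0 <= a -> b <= 1 -> a <= x <= b -> I01 x.
Proof. unfold I01; lra. Qed.

Lemma pI01 i x : p i <= x <= q i -> I01 x.
Proof. pose proof (gpq i). unfold I01; lra. Qed.

Lemma Fz_S i k x : p i <= x <= q i -> p i <= Fz (f i) k x <= q i.
Proof.
  intros H. pose proof (gpq i).
  destruct (classic (p i < x < q i)) as [Hin|Hout].
  - pose proof (PS_Fz_in _ _ _ (gPS i) k x Hin). lra.
  - rewrite (Ifix i); auto. apply pI01 with i; auto.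
Qed.

Lemma Fz_Ik i k x : u i <= x <= f i (u i) -> O i k <= Fz (f i) k x <= O i (k+1).
Proof.
  intros H. pose proof (O_in i 0). pose proof (O_in i 1). rewrite O_0, O_1 in *.
  pose proof (Fgood i k) as Gk.
  assert (I01 x) by (apply pI01 with i; lra).
  assert (I01 (u i)) by (apply pI01 with i; lra).
  assert (I01 (f i (u i))) by (apply pI01 with i; lra).
  split.
  - unfold O. apply good_le; auto; lra.
  - unfold O. rewrite Fz_add, Fz_1; auto using fgood. apply good_le; auto; lra.
Qed.

Definition ST i j := (forall x, I01 x -> f i x = f j x) /\ u i = u j.

Lemma ST_sym i j : ST i j -> ST j i.
Proof. intros [A B]; split; auto. intros; symmetry; auto. Qed.

Lemma ST_p i j : ST i j -> p i = p j /\ q i = q j.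
Proof.
  intros [E _].
  assert (K : forall i j, (forall x, I01 x -> f i x = f j x) -> p i <= p j /\ q j <= q i).
  { clear i j E. intros i j E. pose proof (gpq i); pose proof (gpq j).
    split.
    - destruct (Rle_or_lt (p i) (p j)) as [|Hl]; auto. exfalso.
      set (x := (p j + Rmin (p i) (q j)) / 2).
      assert (p j < x < q j) by (unfold x, Rmin; destruct Rle_dec; lra).
      assert (x <= p i) by (unfold x, Rmin; destruct Rle_dec; lra).
      assert (I01 x) by (unfold I01; lra).
      pose proof (PS_mov _ _ _ (gPS j) x H1). rewrite <- E in H4; auto.
      rewrite f_fix in H4; auto. lra. lra.
    - destruct (Rle_or_lt (q j) (q i)) as [|Hl]; auto. exfalso.
      set (x := (q j + Rmax (q i) (p j)) / 2).
      assert (p j < x < q j) by (unfold x, Rmax; destruct Rle_dec; lra).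
      assert (q i <= x) by (unfold x, Rmax; destruct Rle_dec; lra).
      assert (I01 x) by (unfold I01; lra).
      pose proof (PS_mov _ _ _ (gPS j) x H1). rewrite <- E in H4; auto.
      rewrite f_fix in H4; auto. lra. lra. }
  destruct (K i j E); destruct (K j i); auto. intros; symmetry; auto.
  split; lra.
Qed.

Lemma ST_Fz i j k x : ST i j -> I01 x -> Fz (f i) k x = Fz (f j) k x.
Proof. intros [E _] Hx. apply Fz_ext; auto using fgood. Qed.

Lemma ST_O i j k : ST i j -> O i k = O j k.
Proof.
  intros H. unfold O. destruct H as [E U]. rewrite U. apply ST_Fz; auto. split; auto.
  apply pI01 with j. pose proof (gU j); lra.
Qed.

Lemma cases4 i j :
  ST i j \/ (q i <= p j \/ q j <= p i) \/
  (u j <= p i /\ q i <= f j (u j)) \/ (u i <= p j /\ q j <= f i (u i)).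
Proof.
  destruct (classic (ST i j)) as [|N]; auto. right.
  destruct FS as [_ H].
  assert (D : (exists x, I01 x /\ f i x <> f j x) \/ u i <> u j).
  { destruct (classic (u i = u j)); auto. left. apply NNPP; intros Hn. apply N; split; auto.
    intros x Hx. apply NNPP; intros Hn2. apply Hn; eauto. }
  pose proof (gpq i); pose proof (gpq j).
  destruct (H i j D) as [A|[A|A]].
  - left. destruct (Rle_or_lt (q i) (p j)); auto. destruct (Rle_or_lt (q j) (p i)); auto.
    exfalso. apply (A ((Rmax (p i) (p j) + Rmin (q i) (q j))/2)).
    unfold Rmax, Rmin; repeat destruct Rle_dec; lra.
  - right; left. pose proof (A (p i)). pose proof (A (q i)). split. apply H2; lra. apply H3; lra.
  - right; right. pose proof (A (p j)). pose proof (A (q j)). split. apply H2; lra. apply H3; lra.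
Qed.

Definition G := in_gen f.

Lemma G_good g : G g -> good g.
Proof.
  induction 1.
  - apply (good_ext (fun x => x)); auto using good_id.
  - apply (good_ext (fun x => f i (g x))); auto. apply good_comp; auto using fgood.
  - apply (good_ext (fun x => inv (f i) (g x))).
    apply good_comp; auto using good_inv, fgood.
    intros x Hx. destruct (H0 x Hx). symmetry; apply inv_unique; auto using fgood.
Qed.

Lemma G_ext g h : G g -> (forall x, I01 x -> h x = g x) -> G h.
Proof.
  intros Hg; revert h. induction Hg; intros h' E.
  - apply gen_id. intros; rewrite E; auto.
  - apply (gen_mul f i g h'); auto. intros; rewrite E; auto.
  - apply (gen_inv f i g h'); auto. intros; rewrite E; auto.
Qed.

Lemma G_id : G (fun x => x).
Proof. apply gen_id; auto. Qed.

Lemma G_comp g h : G g -> G h -> G (fun x => g (h x)).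
Proof.
  intros Hg Hh. pose proof (G_good h Hh) as Gh. revert Hh. induction Hg; intros Hh.
  - apply (G_ext h); auto. intros; apply H; apply good_I01; auto.
  - apply (gen_mul f i (fun x => g (h x))). apply IHHg; auto. intros; apply H; apply good_I01; auto.
  - apply (gen_inv f i (fun x => g (h x))). apply IHHg; auto. intros; apply H; apply good_I01; auto.
Qed.

Lemma G_f i : G (f i).
Proof. apply (gen_mul f i (fun x => x)). apply G_id. auto. Qed.

Lemma G_finv i : G (inv (f i)).
Proof.
  apply (gen_inv f i (fun x => x)). apply G_id. intros; split.
  apply inv_I01; auto using fgood. apply inv_r; auto using fgood.
Qed.

Lemma G_Fz_gen t k : G t -> (G (inv t)) -> G (Fz t k).
Proof.
  intros Ht Hi. pose proof (G_good t Ht) as Gt.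
  induction k using Z.peano_ind.
  - apply G_id.
  - apply (G_ext (fun x => t (Fz t k x))). apply G_comp; auto.
    intros; rewrite <- Z.add_1_r, Fz_succ; auto.
  - apply (G_ext (fun x => inv t (Fz t k x))). apply G_comp; auto.
    intros; rewrite <- Z.sub_1_r, Fz_pred; auto.
Qed.

Lemma G_Fz i k : G (Fz (f i) k).
Proof. apply G_Fz_gen; auto using G_f, G_finv. Qed.

Lemma G_inv g : G g -> G (inv g).
Proof.
  intros Hg. pose proof (G_good g Hg) as Gg. induction Hg.
  - apply (G_ext (fun x => x)); auto using G_id. intros x Hx.
    apply inv_unique; auto.
  - assert (Gg0 : good g) by (apply G_good; auto).
    apply (G_ext (fun x => inv g (inv (f i) x))). apply G_comp; auto using G_finv.
    intros x Hx. apply inv_unique; auto. apply inv_I01; auto. apply inv_I01; auto using fgood.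
    rewrite H. rewrite !inv_r; auto using fgood, inv_I01.
    apply inv_I01; auto. apply inv_I01; auto using fgood.
  - assert (Gg0 : good g) by (apply G_good; auto).
    apply (G_ext (fun x => inv g (f i x))). apply G_comp; auto using G_f.
    intros x Hx. apply inv_unique; auto. apply inv_I01; auto. apply good_I01; auto using fgood.
    assert (J : I01 (inv g (f i x))) by (apply inv_I01; auto; apply good_I01; auto using fgood).
    destruct (H (inv g (f i x)) J) as [J2 E].
    apply (good_inj (f i)); auto using fgood.
    rewrite E, inv_r; auto. apply good_I01; auto using fgood.
Qed.


Lemma step_mono (o : Z -> R) j k : (forall k, o k < o (k+1)%Z) -> (j < k)%Z -> o j < o k.
Proof.
  intros S H. replace k with (j + Z.of_nat (Z.to_nat (k - j)))%Z by lia.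
  assert (0 < Z.to_nat (k - j))%nat by lia.
  revert H0. generalize (Z.to_nat (k - j)) as n. intros n Hn.
  induction n. lia.
  destruct n. simpl. apply S.
  rewrite Nat2Z.inj_succ, <- Z.add_1_r, Z.add_assoc.
  eapply Rlt_trans. apply IHn. lia. apply S.
Qed.

Lemma step_le (o : Z -> R) j k : (forall k, o k < o (k+1)%Z) -> (j <= k)%Z -> o j <= o k.
Proof. intros S H. destruct (Z.eq_dec j k). subst; lra. left; apply step_mono; auto; lia. Qed.

Definition BI (a b : R) (o : Z -> R) : Prop :=
  0 <= a /\ a < b /\ b <= 1 /\ (forall k, a < o k < b) /\ (forall k, o k < o (k+1)%Z) /\ (forall x, a < x < b -> exists k, o k <= x < o (k+1)%Z).

Lemma BI_a a b o : BI a b o -> I01 a.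
Proof. intros [A [B [C _]]]; unfold I01; lra. Qed.
Lemma BI_b a b o : BI a b o -> I01 b.
Proof. intros [A [B [C _]]]; unfold I01; lra. Qed.
Lemma BI_o a b o k : BI a b o -> I01 (o k).
Proof. intros [A [B [C [D _]]]]; specialize (D k); unfold I01; lra. Qed.
Lemma BI_ab a b o : BI a b o -> a < b.
Proof. intros [A [B _]]; auto. Qed.
Lemma BI_in a b o k : BI a b o -> a < o k < b.
Proof. intros [A [B [C [D _]]]]; auto. Qed.
Lemma BI_step a b o k : BI a b o -> o k < o (k+1)%Z.
Proof. intros [A [B [C [D [E _]]]]]; auto. Qed.
Lemma BI_cof a b o x : BI a b o -> a < x < b -> exists k, o k <= x < o (k+1)%Z.
Proof. intros [A [B [C [D [E F]]]]]; auto. Qed.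
Lemma BI_mono a b o j k : BI a b o -> (j < k)%Z -> o j < o k.
Proof. intros H; apply step_mono; intros; eapply BI_step; eauto. Qed.
Lemma BI_le a b o j k : BI a b o -> (j <= k)%Z -> o j <= o k.
Proof. intros H; apply step_le; intros; eapply BI_step; eauto. Qed.

Lemma BI_transport phi a b o : good phi -> BI a b o ->
  BI (phi a) (phi b) (fun k => phi (o k)).
Proof.
  intros Gp H. pose proof (BI_a _ _ _ H). pose proof (BI_b _ _ _ H).
  assert (Io : forall k, I01 (o k)) by (intros; eapply BI_o; eauto).
  pose proof (good_I01 _ _ Gp H0) as Ha. pose proof (good_I01 _ _ Gp H1) as Hb.
  split; [|split; [|split; [|split; [|split]]]].
  - unfold I01 in Ha; lra.
  - apply good_lt; auto. eapply BI_ab; eauto.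
  - unfold I01 in Hb; lra.
  - intros k. destruct (BI_in _ _ _ k H). split; apply good_lt; auto.
  - intros k. apply good_lt; auto. eapply BI_step; eauto.
  - intros x Hx. assert (I01 x) by (unfold I01 in *; lra).
    destruct (proj2 (proj2 Gp) x H2) as [y [Hy <-]].
    assert (a < y < b).
    { split; apply (good_lt_rev phi); auto; lra. }
    destruct (BI_cof _ _ _ y H H3) as [k Hk]. exists k.
    split. apply good_le; auto; lra. apply good_lt; auto; lra.
Qed.

Lemma BI_shift a b o n : BI a b o -> BI a b (fun k => o (k + n)%Z).
Proof.
  intros H. destruct H as [A [B [C [D [E F]]]]].
  split; [|split; [|split; [|split; [|split]]]]; auto.
  - intros k. replace (k + 1 + n)%Z with ((k + n) + 1)%Z by lia. auto.
  - intros x Hx. destruct (F x Hx) as [k Hk]. exists (k - n)%Z.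
    replace (k - n + n)%Z with k by lia. replace (k - n + 1 + n)%Z with (k + 1)%Z by lia. auto.
Qed.

Inductive CB : I -> R -> R -> (Z -> R) -> Prop :=
| cb_gen i : CB i (p i) (q i) (O i)
| cb_shift i a b o n : CB i a b o -> CB i a b (fun k => o (k + n)%Z)
| cb_push i a b o l k : CB i a b o -> u l <= a -> b <= f l (u l) ->
    CB i (Fz (f l) k a) (Fz (f l) k b) (fun k' => Fz (f l) k (o k')).

Lemma CB_BI i a b o : CB i a b o -> BI a b o.
Proof.
  induction 1.
  - pose proof (gpq i). split; [|split; [|split; [|split; [|split]]]]; try lra.
    apply O_in. intros k; apply O_mono; lia. apply O_cof.
  - apply BI_shift; auto.
  - apply BI_transport; auto. apply Fgood.
Qed.

Lemma CB_ext i a b o o' : CB i a b o -> (forall k, o k = o' k) -> CB i a b o'.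
Proof.
  intros H E. replace o' with o; auto. apply functional_extensionality; auto.
Qed.

Lemma CB_eq i a b o a' b' o' : CB i a b o -> a = a' -> b = b' -> (forall k, o k = o' k) -> CB i a' b' o'.
Proof. intros H <- <- E; eapply CB_ext; eauto. Qed.

Lemma Fz_out l e x : I01 x -> (x <= p l \/ q l <= x) -> Fz (f l) e x = x.
Proof. intros H1 H2. apply Ifix; auto. lra. Qed.

Lemma Fz_Im m l e x : u m <= p l -> q l <= f m (u m) -> u m <= x <= f m (u m) ->
  u m <= Fz (f l) e x <= f m (u m).
Proof.
  intros A B H. assert (I01 x).
  { pose proof (O_in m 0); pose proof (O_in m 1); rewrite O_0, O_1 in *. apply pI01 with m; lra. }
  destruct (classic (p l < x < q l)) as [Hin|Hout].
  - pose proof (PS_Fz_in _ _ _ (gPS l) e x Hin). lra.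
  - rewrite Ifix; auto.
Qed.

Lemma CB_move i a b o : CB i a b o -> forall l e,
  CB i (Fz (f l) e a) (Fz (f l) e b) (fun k => Fz (f l) e (o k)).
Proof.
  induction 1; intros l1 e.
  -
    rename l1 into l.
    destruct (cases4 i l) as [ST1|[D|[N|N]]].
    + destruct (ST_p _ _ ST1) as [Ep Eq].
      pose proof (gpq i).
      apply (CB_eq i (p i) (q i) (fun k => O i (k + e)%Z)).
      apply cb_shift, cb_gen.
      rewrite Fz_out; auto. apply pI01 with i; lra. lra.
      rewrite Fz_out; auto. apply pI01 with i; lra. lra.
      intros k. unfold O. rewrite (ST_Fz l i). rewrite <- Fz_add; auto using fgood. f_equal. lia.
      apply pI01 with i; pose proof (gU i); lra. apply ST_sym; auto. apply Fz_I01. apply fgood.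
      apply pI01 with i; pose proof (gU i); lra.
    + pose proof (gpq i); pose proof (gpq l).
      apply (CB_eq i (p i) (q i) (O i)). apply cb_gen.
      rewrite Fz_out; auto. apply pI01 with i; lra. lra.
      rewrite Fz_out; auto. apply pI01 with i; lra. lra.
      intros k. rewrite Fz_out; auto. apply pI01 with i; pose proof (O_in i k); lra.
      pose proof (O_in i k); lra.
    + apply cb_push; auto. apply cb_gen. lra. lra.
    + pose proof (gpq i); pose proof (gpq l); pose proof (gU i).
      pose proof (O_in i 1). rewrite O_1 in H2.
      apply (CB_eq i (p i) (q i) (O i)). apply cb_gen.
      rewrite Fz_out; auto. apply pI01 with i; lra. left; lra.
      rewrite Fz_out; auto. apply pI01 with i; lra. right; lra.
      intros k. pose proof (O_in i k). rewrite Fz_out; auto. apply pI01 with i; lra.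
      destruct (Z.le_gt_cases k 0).
      * left. pose proof (O_le i k 0 H4). rewrite O_0 in H5. lra.
      * right. pose proof (O_le i 1 k ltac:(lia)). rewrite O_1 in H5. lra.
  -
    rename l1 into l.
    exact (CB_ext _ _ _ _ _ (cb_shift _ _ _ _ n (IHCB l e)) (fun k => eq_refl)).
  -
    rename l into m, k into r, l1 into l. pose proof (CB_BI _ _ _ _ H) as B.
    pose proof (BI_ab _ _ _ B) as Hab.
    assert (Ia : u m <= a <= f m (u m)) by (pose proof (BI_in _ _ _ 0 B); lra).
    assert (Ib : u m <= b <= f m (u m)) by (pose proof (BI_in _ _ _ 0 B); lra).
    assert (Io : forall k, u m <= o k <= f m (u m)) by (intros k; pose proof (BI_in _ _ _ k B); lra).
    pose proof (gU m). pose proof (gpq m).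
    assert (Sm : forall x, u m <= x <= f m (u m) -> p m <= Fz (f m) r x <= q m).
    { intros x Hx. apply Fz_S. pose proof (O_in m 1). rewrite O_1 in H4. lra. }
    assert (I01m : forall x, u m <= x <= f m (u m) -> I01 x).
    { intros x Hx. pose proof (O_in m 1). rewrite O_1 in H4. apply pI01 with m; lra. }
    destruct (cases4 m l) as [ST1|[D|[N|N]]].
    + apply (CB_eq i _ _ _ _ _ _ (cb_push i a b o m (e + r) H H0 H1)).
      rewrite (ST_Fz l m), Fz_add; auto using fgood. apply ST_sym; auto. apply Fz_I01; auto using fgood.
      rewrite (ST_Fz l m), Fz_add; auto using fgood. apply ST_sym; auto. apply Fz_I01; auto using fgood.
      intros k. rewrite (ST_Fz l m), Fz_add; auto using fgood. apply ST_sym; auto. apply Fz_I01; auto using fgood.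
    + pose proof (gpq l).
      assert (Fx : forall x, u m <= x <= f m (u m) -> Fz (f l) e (Fz (f m) r x) = Fz (f m) r x).
      { intros x Hx. pose proof (Sm x Hx). apply Fz_out. apply pI01 with m; lra. lra. }
      apply (CB_eq i _ _ _ _ _ _ (cb_push i a b o m r H H0 H1)); intros; rewrite Fx; auto.
    + apply cb_push. apply cb_push; auto.
      pose proof (Sm a Ia); lra. pose proof (Sm b Ib); lra.
    + destruct (Z.eq_dec r 0) as [->|Nr].
      * apply (CB_eq i _ _ _ _ _ _ (cb_push i _ _ _ m 0 (IHCB l e) ltac:(apply Fz_Im; tauto) ltac:(apply Fz_Im; tauto))); intros; reflexivity.
      * pose proof (gpq l).
        assert (Fx : forall x, u m <= x <= f m (u m) -> Fz (f l) e (Fz (f m) r x) = Fz (f m) r x).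
        { intros x Hx. pose proof (Fz_Ik m r x Hx). apply Fz_out. apply I01m in Hx. apply Fz_I01; auto using fgood.
          destruct (Z.le_gt_cases r 0).
          - left. pose proof (O_le m (r+1) 0 ltac:(lia)) as Q1. rewrite O_0 in Q1. lra.
          - right. pose proof (O_le m 1 r ltac:(lia)) as Q1. rewrite O_1 in Q1. lra. }
        apply (CB_eq i _ _ _ _ _ _ (cb_push i a b o m r H H0 H1)); intros; rewrite Fx; auto.
Qed.

Lemma CB_G g : G g -> forall i a b o, CB i a b o -> CB i (g a) (g b) (fun k => g (o k)).
Proof.
  induction 1; intros j a b o HC; pose proof (CB_BI _ _ _ _ HC) as B.
  - apply (CB_eq j a b o); auto. rewrite H; auto. eapply BI_a; eauto.
    rewrite H; auto. eapply BI_b; eauto. intros; rewrite H; auto. eapply BI_o; eauto.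
  - pose proof (CB_move _ _ _ _ (IHin_gen j a b o HC) i 1) as C.
    apply (CB_eq _ _ _ _ _ _ _ C). rewrite H0; auto. eapply BI_a; eauto.
    rewrite H0; auto. eapply BI_b; eauto. intros; rewrite H0; auto. eapply BI_o; eauto.
  - pose proof (CB_move _ _ _ _ (IHin_gen j a b o HC) i (-1)) as C.
    pose proof (G_good g H) as Gg.
    assert (E : forall x, I01 x -> Fz (f i) (-1) (g x) = h x).
    { intros x Hx. rewrite Fz_m1. apply inv_unique; auto using fgood. apply H0; auto. apply H0; auto. }
    apply (CB_eq _ _ _ _ _ _ _ C). rewrite E; auto. eapply BI_a; eauto.
    rewrite E; auto. eapply BI_b; eauto. intros; rewrite E; auto. eapply BI_o; eauto.
Qed.


Definition R1 (a b c d : R) := b <= c \/ d <= a.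
Definition R2 (o : Z -> R) (c d : R) := exists k, o k <= c /\ d <= o (k+1)%Z.
Definition R4 (a b : R) (o : Z -> R) (c d : R) (o' : Z -> R) :=
  a = c /\ b = d /\ exists n, forall k, o' k = o (k+n)%Z.
Definition Rel a b o c d o' := R1 a b c d \/ R2 o c d \/ R2 o' a b \/ R4 a b o c d o'.
Definition R14 a b o c d o' := R1 a b c d \/ R4 a b o c d o'.

Section Transport.
Variables (phi : R -> R) (a b c d : R) (o o' : Z -> R).
Hypothesis Gp : good phi.
Hypotheses (B1 : BI a b o) (B2 : BI c d o').

Lemma tR1 : R1 a b c d -> R1 (phi a) (phi b) (phi c) (phi d).
Proof.
  pose proof (BI_a _ _ _ B1); pose proof (BI_b _ _ _ B1); pose proof (BI_a _ _ _ B2); pose proof (BI_b _ _ _ B2).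
  intros [Hc|Hc]; [left|right]; apply good_le; auto.
Qed.

Lemma tR2 : R2 o c d -> R2 (fun k => phi (o k)) (phi c) (phi d).
Proof.
  pose proof (BI_a _ _ _ B2); pose proof (BI_b _ _ _ B2).
  intros [k [H1 H2]]. exists k; split; apply good_le; auto; eapply BI_o; eauto.
Qed.

Lemma tR2' : R2 o' a b -> R2 (fun k => phi (o' k)) (phi a) (phi b).
Proof.
  pose proof (BI_a _ _ _ B1); pose proof (BI_b _ _ _ B1).
  intros [k [H1 H2]]. exists k; split; apply good_le; auto; eapply BI_o; eauto.
Qed.

Lemma tR4 : R4 a b o c d o' -> R4 (phi a) (phi b) (fun k => phi (o k)) (phi c) (phi d) (fun k => phi (o' k)).
Proof.
  intros [E1 [E2 [n Hn]]]. split; [|split]; try congruence. exists n; intros k; rewrite Hn; auto.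
Qed.

Lemma tRel : Rel a b o c d o' -> Rel (phi a) (phi b) (fun k => phi (o k)) (phi c) (phi d) (fun k => phi (o' k)).
Proof.
  intros [H|[H|[H|H]]]; [left; apply tR1|right; left; apply tR2|right; right; left; apply tR2'|right; right; right; apply tR4]; auto.
Qed.

Lemma tR14 : R14 a b o c d o' -> R14 (phi a) (phi b) (fun k => phi (o k)) (phi c) (phi d) (fun k => phi (o' k)).
Proof. intros [H|H]; [left; apply tR1|right; apply tR4]; auto. Qed.
End Transport.

Lemma R2_shift o c d n : R2 o c d -> R2 (fun k => o (k + n)%Z) c d.
Proof.
  intros [k H]. exists (k - n)%Z. replace (k - n + n)%Z with k by lia.
  replace (k - n + 1 + n)%Z with (k+1)%Z by lia. auto.
Qed.

Lemma R4_shift1 a b o c d o' n : R4 a b o c d o' -> R4 a b (fun k => o (k + n)%Z) c d o'.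
Proof.
  intros [E1 [E2 [m Hm]]]. split; [|split]; auto. exists (m - n)%Z. intros k. rewrite Hm. f_equal; lia.
Qed.

Lemma R4_shift2 a b o c d o' n : R4 a b o c d o' -> R4 a b o c d (fun k => o' (k + n)%Z).
Proof.
  intros [E1 [E2 [m Hm]]]. split; [|split]; auto. exists (n + m)%Z. intros k. rewrite Hm. f_equal; lia.
Qed.

Lemma Rel_shift1 a b o c d o' n : Rel a b o c d o' -> Rel a b (fun k => o (k + n)%Z) c d o'.
Proof.
  intros [H|[H|[H|H]]]; [left|right;left;apply R2_shift|right;right;left|right;right;right;apply R4_shift1]; auto.
Qed.

Lemma Rel_shift2 a b o c d o' n : Rel a b o c d o' -> Rel a b o c d (fun k => o' (k + n)%Z).
Proof.
  intros [H|[H|[H|H]]]; [left|right;left|right;right;left;apply R2_shift|right;right;right;apply R4_shift2]; auto.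
Qed.

Lemma R14_shift1 a b o c d o' n : R14 a b o c d o' -> R14 a b (fun k => o (k + n)%Z) c d o'.
Proof. intros [H|H]; [left|right; apply R4_shift1]; auto. Qed.
Lemma R14_shift2 a b o c d o' n : R14 a b o c d o' -> R14 a b o c d (fun k => o' (k + n)%Z).
Proof. intros [H|H]; [left|right; apply R4_shift2]; auto. Qed.

Lemma fun_eta (o : Z -> R) : (fun k => o k) = o.
Proof. reflexivity. Qed.

Lemma push_bounds j c d o' l k : CB j c d o' -> u l <= c -> d <= f l (u l) ->
  O l k <= Fz (f l) k c /\ Fz (f l) k d <= O l (k+1) /\
  p l <= Fz (f l) k c /\ Fz (f l) k d <= q l.
Proof.
  intros HC H1 H2. pose proof (CB_BI _ _ _ _ HC) as B. pose proof (BI_ab _ _ _ B).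
  pose proof (Fz_Ik l k c ltac:(lra)). pose proof (Fz_Ik l k d ltac:(lra)).
  pose proof (O_in l k). pose proof (O_in l (k+1)). lra.
Qed.

Lemma Rel_gen i j c d o' : CB j c d o' -> Rel (p i) (q i) (O i) c d o'.
Proof.
  induction 1.
  - rename i0 into j. pose proof (gU i); pose proof (gU j). pose proof (O_in i 1); pose proof (O_in j 1).
    rewrite O_1 in *.
    destruct (cases4 i j) as [ST1|[D|[N|N]]].
    + destruct (ST_p _ _ ST1) as [E1 E2]. right; right; right. split; [|split]; auto.
      exists 0%Z; intros k. rewrite Z.add_0_r. symmetry; apply ST_O; auto.
    + left; unfold R1; lra.
    + right; right; left. exists 0%Z. rewrite O_0. simpl. rewrite O_1. lra.
    + right; left. exists 0%Z. rewrite O_0. simpl. rewrite O_1. lra.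
  - destruct IHCB as [A|[A|[A|A]]]; [left|right;left|right;right;left;apply R2_shift|right;right;right;apply R4_shift2]; auto.
  - rename i0 into j. pose proof (CB_BI _ _ _ _ H) as B. pose proof (BI_ab _ _ _ B).
    pose proof (push_bounds j a b o l k H H0 H1) as PB.
    pose proof (gU i); pose proof (gU l). pose proof (O_in i 1); pose proof (O_in l 1).
    pose proof (gpq i); pose proof (gpq l).
    rewrite O_1 in *.
    destruct (cases4 i l) as [ST1|[D|[N|N]]].
    + right; left. exists k. rewrite !(ST_O i l); auto. lra.
    + left; unfold R1; lra.
    + destruct (Z.eq_dec k 0) as [->|Nk]. exact IHCB.
      left. unfold R1. destruct (Z.le_gt_cases k 0).
      * right. pose proof (O_le l (k+1) 0 ltac:(lia)) as Q1. rewrite O_0 in Q1. lra.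
      * left. pose proof (O_le l 1 k ltac:(lia)) as Q1. rewrite O_1 in Q1. lra.
    + right; left. exists 0%Z. rewrite O_0. simpl. rewrite O_1. lra.
Qed.

Lemma Rel_all i a b o : CB i a b o -> forall j c d o', CB j c d o' -> Rel a b o c d o'.
Proof.
  induction 1; intros j c d o' HD.
  - eapply Rel_gen; eauto.
  - apply Rel_shift1; eauto.
  - pose proof (CB_move _ _ _ _ HD l (-k)) as D2.
    pose proof (IHCB _ _ _ _ D2) as R.
    pose proof (CB_BI _ _ _ _ H) as B1. pose proof (CB_BI _ _ _ _ D2) as B2.
    pose proof (CB_BI _ _ _ _ HD) as B3.
    pose proof (tRel (Fz (f l) k) _ _ _ _ _ _ (Fgood l k) B1 B2 R) as R'.
    assert (Ic : I01 c) by (eapply BI_a; eauto). assert (Id : I01 d) by (eapply BI_b; eauto).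
    pose proof (fgood l).
    rewrite !Fz_cancel in R' by auto.
    replace o' with (fun k0 => Fz (f l) k (Fz (f l) (-k) (o' k0))). auto.
    apply functional_extensionality; intros; apply Fz_cancel; auto using fgood. eapply BI_o; eauto.
Qed.

Lemma R14_gen i j c d o' : CB j c d o' -> j = i -> R14 (p i) (q i) (O i) c d o'.
Proof.
  induction 1; intros Ej; subst.
  - right. split; [|split]; auto. exists 0%Z; intros; rewrite Z.add_0_r; auto.
  - destruct (IHCB eq_refl); [left|right; apply R4_shift2]; auto.
  - pose proof (CB_BI _ _ _ _ H) as B. pose proof (BI_ab _ _ _ B).
    pose proof (push_bounds _ a b o l k H H0 H1) as PB.
    specialize (IHCB eq_refl).
    pose proof (gU i); pose proof (gU l). pose proof (O_in i 1); pose proof (O_in l 1).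
    pose proof (gpq i); pose proof (gpq l).
    rewrite O_1 in *.
    destruct (cases4 i l) as [ST1|[D|[N|N]]].
    + exfalso. destruct ST1 as [E1 E2]. rewrite <- E2 in *. rewrite <- E1 in * by (apply pI01 with i; lra).
      destruct IHCB as [A|[A1 [A2 _]]]; unfold R1 in *; lra.
    + left; unfold R1; lra.
    + destruct (Z.eq_dec k 0) as [->|Nk]. exact IHCB.
      left. unfold R1. destruct (Z.le_gt_cases k 0).
      * right. pose proof (O_le l (k+1) 0 ltac:(lia)) as Q1. rewrite O_0 in Q1. lra.
      * left. pose proof (O_le l 1 k ltac:(lia)) as Q1. rewrite O_1 in Q1. lra.
    + exfalso. destruct IHCB as [A|[A1 [A2 _]]]; unfold R1 in *; lra.
Qed.

Lemma R14_all i a b o : CB i a b o -> forall c d o', CB i c d o' -> R14 a b o c d o'.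
Proof.
  induction 1; intros c d o' HD.
  - eapply R14_gen; eauto.
  - apply R14_shift1; eauto.
  - pose proof (CB_move _ _ _ _ HD l (-k)) as D2.
    pose proof (IHCB _ _ _ D2) as R.
    pose proof (CB_BI _ _ _ _ H) as B1. pose proof (CB_BI _ _ _ _ D2) as B2.
    pose proof (CB_BI _ _ _ _ HD) as B3.
    pose proof (tR14 (Fz (f l) k) _ _ _ _ _ _ (Fgood l k) B1 B2 R) as R'.
    assert (Ic : I01 c) by (eapply BI_a; eauto). assert (Id : I01 d) by (eapply BI_b; eauto).
    pose proof (fgood l).
    rewrite !Fz_cancel in R' by auto.
    replace o' with (fun k0 => Fz (f l) k (Fz (f l) (-k) (o' k0))). auto.
    apply functional_extensionality; intros; apply Fz_cancel; auto using fgood. eapply BI_o; eauto.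
Qed.

Lemma CB_TE i a b o : CB i a b o ->
  exists t, G t /\ t a = a /\ t b = b /\ forall k, t (o k) = o (k+1)%Z.
Proof.
  induction 1.
  - exists (f i). pose proof (gpq i). split; [apply G_f|split; [|split]].
    apply f_fix. apply pI01 with i; lra. lra.
    apply f_fix. apply pI01 with i; lra. lra.
    intros k. unfold O. rewrite Fz_succ; auto using fgood. apply pI01 with i; pose proof (gU i); lra.
  - destruct IHCB as [t [Gt [T1 [T2 T3]]]]. exists t; split; [|split; [|split]]; auto.
    intros k. rewrite T3. f_equal; lia.
  - destruct IHCB as [t [Gt [T1 [T2 T3]]]].
    pose proof (CB_BI _ _ _ _ H) as B.
    exists (fun x => Fz (f l) k (t (Fz (f l) (-k) x))).
    split; [|split; [|split]].
    + apply G_comp; auto using G_Fz. apply G_comp; auto using G_Fz.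
    + rewrite Fz_cancel', T1; auto using fgood. eapply BI_a; eauto.
    + rewrite Fz_cancel', T2; auto using fgood. eapply BI_b; eauto.
    + intros k'. rewrite Fz_cancel', T3; auto using fgood. eapply BI_o; eauto.
Qed.


Lemma shift_pos g a b o s : good g -> BI a b o -> (forall k, g (o k) = o (k+s)%Z) -> (0 < s)%Z ->
  forall x, a < x < b -> x < g x.
Proof.
  intros Gg B Hs Hp x Hx. destruct (BI_cof _ _ _ x B Hx) as [k Hk].
  assert (I01 x) by (pose proof (BI_a _ _ _ B); pose proof (BI_b _ _ _ B); unfold I01 in *; lra).
  assert (g (o k) <= g x) by (apply good_le; auto; [eapply BI_o; eauto|lra]).
  rewrite Hs in H0. pose proof (BI_le _ _ _ (k+1) (k+s) B ltac:(lia)). lra.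
Qed.

Lemma shift_neg g a b o s : good g -> BI a b o -> (forall k, g (o k) = o (k+s)%Z) -> (s < 0)%Z ->
  forall x, a < x < b -> g x < x.
Proof.
  intros Gg B Hs Hp x Hx. destruct (BI_cof _ _ _ x B Hx) as [k Hk].
  assert (I01 x) by (pose proof (BI_a _ _ _ B); pose proof (BI_b _ _ _ B); unfold I01 in *; lra).
  assert (g x < g (o (k+1)%Z)) by (apply good_lt; auto; [eapply BI_o; eauto|lra]).
  rewrite Hs in H0. pose proof (BI_le _ _ _ (k+1+s) k B ltac:(lia)). lra.
Qed.

Lemma shift_nf g a b o s : good g -> BI a b o -> (forall k, g (o k) = o (k+s)%Z) -> s <> 0%Z ->
  forall x, a < x < b -> g x <> x.
Proof.
  intros Gg B Hs Hn x Hx. destruct (Z.lt_ge_cases s 0).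
  pose proof (shift_neg g a b o s Gg B Hs H x Hx); lra.
  pose proof (shift_pos g a b o s Gg B Hs ltac:(lia) x Hx); lra.
Qed.

Inductive in_genL (L : list I) : (R -> R) -> Prop :=
| gl_id h : (forall x, I01 x -> h x = x) -> in_genL L h
| gl_mul i g h : In i L -> in_genL L g -> (forall x, I01 x -> h x = f i (g x)) -> in_genL L h
| gl_inv i g h : In i L -> in_genL L g -> (forall x, I01 x -> I01 (h x) /\ f i (h x) = g x) -> in_genL L h.

Lemma genL_mono L L' g : in_genL L g -> incl L L' -> in_genL L' g.
Proof.
  induction 1; intros Hi.
  - apply gl_id; auto.
  - apply (gl_mul L' i g h); auto.
  - apply (gl_inv L' i g h); auto.
Qed.

Lemma genL_G L g : in_genL L g -> G g.
Proof.
  induction 1. apply gen_id; auto. apply (gen_mul f i g h); auto. apply (gen_inv f i g h); auto.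
Qed.

Lemma G_genL g : G g -> exists L, in_genL L g.
Proof.
  induction 1.
  - exists nil; apply gl_id; auto.
  - destruct IHin_gen as [L HL]. exists (i :: L). apply (gl_mul _ i g h); auto. left; auto.
    apply (genL_mono L); auto. intros x Hx; right; auto.
  - destruct IHin_gen as [L HL]. exists (i :: L). apply (gl_inv _ i g h); auto. left; auto.
    apply (genL_mono L); auto. intros x Hx; right; auto.
Qed.

Lemma genL_ind2 L (P : (R -> R) -> Prop) :
  (forall h, (forall x, I01 x -> h x = x) -> P h) ->
  (forall l e g h, In l L -> (e = 1 \/ e = -1)%Z -> in_genL L g -> P g ->
     (forall x, I01 x -> h x = Fz (f l) e (g x)) -> P h) ->
  forall h, in_genL L h -> P h.
Proof.
  intros H0 H1. induction 1.
  - apply H0; auto.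
  - apply (H1 i 1%Z g h); auto.
  - apply (H1 i (-1)%Z g h); auto. intros x Hx. rewrite Fz_m1.
    pose proof (genL_G _ _ H2). symmetry. apply inv_unique; auto using fgood; apply H3; auto.
Qed.

Lemma genL_step L l e g : In l L -> (e = 1 \/ e = -1)%Z -> in_genL L g ->
  in_genL L (fun x => Fz (f l) e (g x)).
Proof.
  intros Hl He Hg. pose proof (G_good _ (genL_G _ _ Hg)) as Gg.
  destruct He; subst.
  - apply (gl_mul L l g); auto.
  - apply (gl_inv L l g); auto. intros x Hx. rewrite Fz_m1. split.
    apply inv_I01; auto using fgood, good_I01. apply inv_r; auto using fgood, good_I01.
Qed.

Lemma genL_fix L g x : in_genL L g -> I01 x -> (forall l, In l L -> ~ (p l < x < q l)) -> g x = x.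
Proof.
  intros Hg Hx Hl. revert g Hg. apply genL_ind2.
  - intros h H; auto.
  - intros l e g h Hin He Hg IH E. rewrite E, IH; auto. apply Ifix; auto.
Qed.

Definition inIm (m l : I) : bool :=
  if excluded_middle_informative (u m <= p l /\ q l <= f m (u m)) then true else false.

Definition Lin m L := filter (inIm m) L.

Lemma Lin_spec m L l : In l (Lin m L) <-> In l L /\ (u m <= p l /\ q l <= f m (u m)).
Proof.
  unfold Lin. rewrite filter_In. unfold inIm.
  destruct excluded_middle_informative; split; intros [A B]; auto; try discriminate; tauto.
Qed.

Lemma filter_lt (A : Type) (b : A -> bool) (L : list A) m : In m L -> b m = false ->
  (length (filter b L) < length L)%nat.
Proof.
  induction L; simpl. tauto.
  intros [->|H] Hb.
  - rewrite Hb. pose proof (filter_length_le b L). lia.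
  - destruct (b a); simpl; specialize (IHL H Hb); lia.
Qed.

Lemma Lin_length m L : In m L -> (length (Lin m L) < length L)%nat.
Proof.
  intros H. apply filter_lt with m; auto. unfold inIm. destruct excluded_middle_informative; auto.
  pose proof (gU m); lra.
Qed.

Lemma Im_I01 m x : u m <= x <= f m (u m) -> I01 x.
Proof. intros. pose proof (O_in m 1). rewrite O_1 in H0. apply pI01 with m. pose proof (gU m). lra. Qed.

Lemma genL_Im m L g x : in_genL (Lin m L) g -> u m <= x <= f m (u m) -> u m <= g x <= f m (u m).
Proof.
  intros Hg Hx. revert g Hg. apply genL_ind2.
  - intros h H; rewrite H; auto. apply Im_I01 with m; auto.
  - intros l e g h Hin He Hg IH E. rewrite E. apply Lin_spec in Hin. apply Fz_Im; tauto.
    apply Im_I01 with m; auto.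
Qed.

Lemma u_lt_fu m : u m < f m (u m).
Proof. apply (PS_mov _ _ _ (gPS m)), gU. Qed.

Lemma genL_um m L g : in_genL (Lin m L) g -> g (u m) = u m.
Proof.
  intros Hg. pose proof (O_in m 1) as O1. rewrite O_1 in O1. pose proof (gU m). pose proof (u_lt_fu m).
  apply (genL_fix _ _ _ Hg). apply Im_I01 with m. lra.
  intros l Hl. apply Lin_spec in Hl. intros [? ?]; lra.
Qed.

Lemma Fz_le m k x y : I01 x -> I01 y -> x <= y -> Fz (f m) k x <= Fz (f m) k y.
Proof. intros; apply good_le; auto using Fgood. Qed.
Lemma Fz_lt m k x y : I01 x -> I01 y -> x < y -> Fz (f m) k x < Fz (f m) k y.
Proof. intros; apply good_lt; auto using Fgood. Qed.

Lemma Fz_back m k y : O m k <= y <= O m (k+1) -> u m <= Fz (f m) (-k) y <= f m (u m).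
Proof.
  intros H. pose proof (O_in m k). pose proof (O_in m (k+1)).
  assert (I01 y) by (apply pI01 with m; lra).
  assert (E1 : Fz (f m) (-k) (O m k) = u m).
  { unfold O. rewrite Fz_cancel'; auto using fgood. apply pI01 with m; pose proof (gU m); lra. }
  assert (E2 : Fz (f m) (-k) (O m (k+1)) = f m (u m)).
  { unfold O. rewrite <- Fz_add; auto using fgood. replace (-k + (k+1))%Z with 1%Z by lia. reflexivity.
    apply pI01 with m; pose proof (gU m); lra. }
  assert (A1 : Fz (f m) (-k) (O m k) <= Fz (f m) (-k) y) by (apply Fz_le; auto; [apply pI01 with m|]; lra).
  assert (A2 : Fz (f m) (-k) y <= Fz (f m) (-k) (O m (k+1))) by (apply Fz_le; auto; [apply pI01 with m|]; lra).
  rewrite E1 in A1. rewrite E2 in A2. lra.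
Qed.

Section Dec.
Variables (m : I) (L : list I).
Hypothesis Hc : forall l, In l L -> ST l m \/ (q l <= p m \/ q m <= p l) \/ (u m <= p l /\ q l <= f m (u m)).

Lemma Dec g : in_genL L g -> exists s, forall k, exists gt, in_genL (Lin m L) gt /\
  forall y, O m k <= y <= O m (k+1) -> g y = Fz (f m) (k+s) (gt (Fz (f m) (-k) y)).
Proof.
  revert g. apply genL_ind2.
  - intros h H. exists 0%Z. intros k. exists (fun x => x). split. apply gl_id; auto.
    intros y Hy. rewrite Z.add_0_r, Fz_cancel; auto using fgood. apply H.
    apply pI01 with m; pose proof (O_in m k); pose proof (O_in m (k+1)); lra.
    apply pI01 with m; pose proof (O_in m k); pose proof (O_in m (k+1)); lra.
  - intros l e g h Hin He Hg [s IH] E.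
    assert (Iy : forall k y, O m k <= y <= O m (k+1) -> I01 y).
    { intros k y Hy; apply pI01 with m; pose proof (O_in m k); pose proof (O_in m (k+1)); lra. }
    destruct (Hc l Hin) as [ST1|[D|N]].
    + exists (s + e)%Z. intros k. destruct (IH k) as [gt [Hgt Hf]]. exists gt; split; auto.
      intros y Hy. rewrite E, Hf; auto. 2: eapply Iy; eauto.
      assert (Iz : I01 (gt (Fz (f m) (-k) y))).
      { apply Im_I01 with m. apply (genL_Im m L); auto. apply Fz_back; auto. }
      rewrite (ST_Fz l m), <- Fz_add; auto using fgood, Fz_I01. f_equal; lia.
    + exists s. intros k. destruct (IH k) as [gt [Hgt Hf]]. exists gt; split; auto.
      intros y Hy. rewrite E, Hf; auto. 2: eapply Iy; eauto.
      assert (Iz : u m <= gt (Fz (f m) (-k) y) <= f m (u m)).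
      { apply (genL_Im m L); auto. apply Fz_back; auto. }
      pose proof (Fz_S m (k+s) (gt (Fz (f m) (-k) y)) ltac:(pose proof (gU m); pose proof (O_in m 1); pose proof (u_lt_fu m); rewrite O_1 in *; lra)) as S1.
      pose proof (gpq l).
      apply Fz_out. apply pI01 with m; exact S1. destruct D; [right|left]; lra.
    + exists s. intros k.
      assert (Hin' : In l (Lin m L)) by (apply Lin_spec; auto).
      destruct (IH k) as [gt [Hgt Hf]].
      destruct (Z.eq_dec (k+s) 0) as [E0|N0].
      * exists (fun z => Fz (f l) e (gt z)). split. apply genL_step; auto.
        intros y Hy. rewrite E, Hf, E0; auto. eapply Iy; eauto.
      * exists gt; split; auto.
        intros y Hy. rewrite E, Hf; auto. 2: eapply Iy; eauto.
        assert (Iz : u m <= gt (Fz (f m) (-k) y) <= f m (u m)).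
        { apply (genL_Im m L); auto. apply Fz_back; auto. }
        pose proof (Fz_Ik m (k+s) _ Iz) as S1.
        pose proof (gpq l). pose proof (O_in m (k+s)); pose proof (O_in m (k+s+1)).
        apply Fz_out. apply pI01 with m; lra.
        destruct (Z.le_gt_cases (k+s) 0).
        -- left. pose proof (O_le m (k+s+1) 0 ltac:(lia)) as Q1. rewrite O_0 in Q1. lra.
        -- right. pose proof (O_le m 1 (k+s) ltac:(lia)) as Q1. rewrite O_1 in Q1. lra.
Qed.
End Dec.

Lemma list_max (L : list I) (P : I -> Prop) (w : I -> R) :
  (exists l, In l L /\ P l) -> exists m, In m L /\ P m /\ forall l, In l L -> P l -> w l <= w m.
Proof.
  induction L as [|a L IH]; intros [l [Hl Pl]]. destruct Hl.
  destruct (classic (exists l, In l L /\ P l)) as [Ex|NEx].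
  - destruct (IH Ex) as [m [Hm [Pm Mm]]].
    destruct (classic (P a)) as [Pa|NPa].
    + destruct (Rle_or_lt (w a) (w m)).
      * exists m; split; [right; auto|split; auto]. intros l0 [<-|H0] P0; auto.
      * exists a; split; [left; auto|split; auto]. intros l0 [<-|H0] P0. lra. specialize (Mm l0 H0 P0); lra.
    + exists m; split; [right; auto|split; auto]. intros l0 [<-|H0] P0; auto. contradiction.
  - destruct Hl as [->|Hl]. 2: exfalso; apply NEx; eauto.
    exists l; split; [left; auto|split; auto]. intros l0 [<-|H0] P0. lra. exfalso; apply NEx; eauto.
Qed.

Lemma E_main n : forall L, (length L <= n)%nat -> forall g, in_genL L g -> forall x, I01 x -> g x <> x ->
  exists i a b o, CB i a b o /\ a < x < b /\ g a = a /\ g b = b /\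
    exists s, s <> 0%Z /\ forall k, g (o k) = o (k+s)%Z.
Proof.
  induction n as [|n IHn]; intros L HL g Hg x Hx Hm.
  - exfalso. apply Hm. apply (genL_fix L); auto. intros l Hl. destruct L; simpl in *; [contradiction|lia].
  - assert (Ex : exists l, In l L /\ p l < x < q l).
    { apply NNPP; intros N. apply Hm. apply (genL_fix L); auto. intros l Hl Hin. apply N; eauto. }
    destruct (list_max L (fun l => p l < x < q l) (fun l => q l - p l) Ex) as [m [HmL [Pm Mm]]].
    assert (Hc : forall l, In l L -> ST l m \/ (q l <= p m \/ q m <= p l) \/ (u m <= p l /\ q l <= f m (u m))).
    { intros l Hl. destruct (cases4 l m) as [A|[A|[A|A]]]; auto.
      exfalso. pose proof (gU m); pose proof (gU l). pose proof (O_in m 1); pose proof (O_in l 1). rewrite O_1 in *.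
      assert (p l < x < q l) by lra. specialize (Mm l Hl H3). lra. }
    pose proof (gU m) as Um. pose proof (gpq m) as PQm. pose proof (O_in m 1) as O1. rewrite O_1 in O1.
    destruct (Dec m L Hc g Hg) as [s Hs].
    pose proof (G_good _ (genL_G _ _ Hg)) as Gg.
    assert (Horb : forall k, g (O m k) = O m (k+s)%Z).
    { intros k. destruct (Hs k) as [gt [Hgt Hf]]. rewrite Hf.
      assert (E0: Fz (f m) (-k) (O m k) = u m) by (unfold O; apply Fz_cancel'; auto using fgood; apply pI01 with m; lra).
      rewrite E0, genL_um with (L := L); auto.
      pose proof (O_le m k (k+1) ltac:(lia)). lra. }
    assert (Hout : forall y, I01 y -> (y = p m \/ y = q m) -> g y = y).
    { intros y Hy Hy2. apply (genL_fix L); auto. intros l Hl [Z1 Z2].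
      destruct (Hc l Hl) as [A|[A|A]].
      - destruct (ST_p _ _ A) as [E1 E2]. rewrite E1, E2 in *. destruct Hy2; lra.
      - destruct Hy2; destruct A; lra.
      - destruct Hy2; lra. }
    destruct (Z.eq_dec s 0) as [Es|Ns].
    2:{ exists m, (p m), (q m), (O m). split; [apply cb_gen|split; [auto|split; [|split]]].
        apply Hout; [apply pI01 with m; lra|auto]. apply Hout; [apply pI01 with m; lra|auto].
        exists s; split; auto. }
    subst s.
    destruct (O_cof m x Pm) as [k Hk].
    assert (Hk2 : O m k < x).
    { destruct Hk as [[Hk1|Hk1] _]; auto. exfalso. apply Hm. rewrite <- Hk1, Horb. f_equal; lia. }
    destruct (Hs k) as [gt [Hgt Hf]].
    pose proof (G_good _ (genL_G _ _ Hgt)) as Ggt.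
    set (x' := Fz (f m) (-k) x).
    assert (Ix' : u m < x' < f m (u m)).
    { assert (E1 : Fz (f m) (-k) (O m k) = u m).
      { unfold O. rewrite Fz_cancel'; auto using fgood. apply pI01 with m; lra. }
      assert (E2 : Fz (f m) (-k) (O m (k+1)) = f m (u m)).
      { unfold O. rewrite <- Fz_add; auto using fgood. replace (-k + (k+1))%Z with 1%Z by lia. reflexivity.
        apply pI01 with m; lra. }
      pose proof (O_in m k); pose proof (O_in m (k+1)).
      assert (A1 : Fz (f m) (-k) (O m k) < x') by (apply Fz_lt; [apply pI01 with m; lra| auto | lra]).
      assert (A2 : x' < Fz (f m) (-k) (O m (k+1))) by (apply Fz_lt; [auto | apply pI01 with m; lra | lra]).
      rewrite E1 in A1. rewrite E2 in A2. lra. }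
    assert (Mx' : gt x' <> x').
    { intros E. apply Hm. rewrite Hf. 2: lra. rewrite Z.add_0_r. fold x'. rewrite E. unfold x'.
      apply Fz_cancel; auto using fgood. }
    assert (Lt : (length (Lin m L) <= n)%nat) by (pose proof (Lin_length m L HmL); lia).
    destruct (IHn (Lin m L) Lt gt Hgt x' ltac:(apply Im_I01 with m; lra) Mx') as
      [i [a [b [o [HC [Hab [Ga [Gb [s' [Ns' Hs']]]]]]]]]].
    pose proof (CB_BI _ _ _ _ HC) as B.
    assert (Fum : gt (u m) = u m) by (apply genL_um with L; auto).
    assert (Fvm : gt (f m (u m)) = f m (u m)).
    { apply (genL_fix _ _ _ Hgt). apply pI01 with m; lra. intros l Hl. apply Lin_spec in Hl. intros [? ?]; lra. }
    assert (Ha : u m <= a).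
    { destruct (Rle_or_lt (u m) a); auto. exfalso.
      apply (shift_nf gt a b o s' Ggt B Hs' Ns' (u m)); auto. lra. }
    assert (Hb : b <= f m (u m)).
    { destruct (Rle_or_lt b (f m (u m))); auto. exfalso.
      apply (shift_nf gt a b o s' Ggt B Hs' Ns' (f m (u m))); auto. lra. }
    pose proof (BI_ab _ _ _ B).
    assert (Fk : forall z, u m <= z <= f m (u m) -> g (Fz (f m) k z) = Fz (f m) k (gt z)).
    { intros z Hz. rewrite Hf. rewrite Z.add_0_r, Fz_cancel'; auto using fgood. apply Im_I01 with m; auto.
      apply Fz_Ik; auto. }
    exists i, (Fz (f m) k a), (Fz (f m) k b), (fun k' => Fz (f m) k (o k')).
    split; [apply cb_push; auto|split; [|split; [|split]]].
    + assert (Ex' : Fz (f m) k x' = x) by (unfold x'; apply Fz_cancel; auto using fgood).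
      assert (Fz (f m) k a < Fz (f m) k x') by (apply Fz_lt; [apply Im_I01 with m; lra| apply Im_I01 with m; lra| lra]).
      assert (Fz (f m) k x' < Fz (f m) k b) by (apply Fz_lt; [apply Im_I01 with m; lra| apply Im_I01 with m; lra| lra]).
      rewrite Ex' in *. lra.
    + rewrite Fk, Ga; auto. lra.
    + rewrite Fk, Gb; auto. lra.
    + exists s'; split; auto. intros k'. rewrite Fk, Hs'; auto.
      pose proof (BI_in _ _ _ k' B). lra.
Qed.

Lemma succ_block a b : succ_fixed G a b -> exists i o, CB i a b o.
Proof.
  intros [g [Hg [H0 [Hab [H1 [Ga [Gb Hn]]]]]]].
  destruct (G_genL g Hg) as [L HL].
  set (x := (a + b) / 2).
  assert (Hx : a < x < b) by (unfold x; lra).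
  destruct (E_main (length L) L (le_n _) g HL x ltac:(unfold I01; lra) (Hn x Hx)) as
    [i [c [d [o [HC [Hcd [Gc [Gd [s [Ns Hs]]]]]]]]]].
  pose proof (CB_BI _ _ _ _ HC) as B. pose proof (G_good g Hg) as Gg.
  assert (a = c /\ b = d) as [-> ->].
  { split.
    - destruct (Rtotal_order a c) as [Hl|[He|Hl]]; auto; exfalso.
      + apply (Hn c); auto. lra.
      + apply (shift_nf g c d o s Gg B Hs Ns a); auto. lra.
    - destruct (Rtotal_order b d) as [Hl|[He|Hl]]; auto; exfalso.
      + apply (shift_nf g c d o s Gg B Hs Ns b); auto. lra.
      + apply (Hn d); auto. lra. }
  exists i, o; auto.
Qed.


Lemma no_linked : without_linked_fixed_points G.
Proof.
  intros a b c d H1 H2.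
  destruct (succ_block a b H1) as [i [o C]]. destruct (succ_block c d H2) as [j [o' D]].
  pose proof (CB_BI _ _ _ _ C) as B1. pose proof (CB_BI _ _ _ _ D) as B2.
  pose proof (BI_ab _ _ _ B1); pose proof (BI_ab _ _ _ B2).
  unfold linked, exactly_one.
  destruct (Rel_all _ _ _ _ C _ _ _ _ D) as [[R|R]|[[k [R3 R4]]|[[k [R3 R4]]|[E1 [E2 _]]]]].
  - intros HH; destruct HH as [[[A B]|[A B]]|[[A B]|[A B]]]; first [lra | apply B; split; lra].
  - intros HH; destruct HH as [[[A B]|[A B]]|[[A B]|[A B]]]; first [lra | apply B; split; lra].
  - pose proof (BI_in _ _ _ k B1); pose proof (BI_in _ _ _ (k+1) B1).
    intros HH; destruct HH as [[[A B]|[A B]]|[[A B]|[A B]]]; first [lra | apply B; split; lra].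
  - pose proof (BI_in _ _ _ k B2); pose proof (BI_in _ _ _ (k+1) B2).
    intros HH; destruct HH as [[[A B]|[A B]]|[[A B]|[A B]]]; first [lra | apply B; split; lra].
  - subst. intros HH; destruct HH as [[[A B]|[A B]]|[[A B]|[A B]]]; first [lra | apply B; split; lra].
Qed.

Section TR.
Variables (a b : R) (i : I) (o : Z -> R).
Hypothesis HC : CB i a b o.

Let B := CB_BI _ _ _ _ HC.

Lemma stab_fix g : stab G a b g -> g a = a /\ g b = b.
Proof.
  intros [Hg [H1 H2]]. pose proof (G_good g Hg) as Gg.
  pose proof (BI_ab _ _ _ B). pose proof (BI_a _ _ _ B) as Ia. pose proof (BI_b _ _ _ B) as Ib.
  destruct (H2 a ltac:(lra)) as [x [Hx Ex]]. destruct (H2 b ltac:(lra)) as [y [Hy Ey]].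
  assert (I01 x) by (unfold I01 in *; lra). assert (I01 y) by (unfold I01 in *; lra).
  pose proof (H1 a ltac:(lra)). pose proof (H1 b ltac:(lra)).
  assert (g a <= g x) by (apply good_le; auto; lra).
  assert (g y <= g b) by (apply good_le; auto; lra).
  split; lra.
Qed.

Lemma stab_of g : G g -> g a = a -> g b = b -> stab G a b g.
Proof.
  intros Hg Ga Gb. pose proof (G_good g Hg) as Gg.
  pose proof (BI_ab _ _ _ B). pose proof (BI_a _ _ _ B) as Ia. pose proof (BI_b _ _ _ B) as Ib.
  split; [auto|split].
  - intros x Hx. assert (I01 x) by (unfold I01 in *; lra).
    assert (g a <= g x) by (apply good_le; auto; lra).
    assert (g x <= g b) by (apply good_le; auto; lra). lra.
  - intros y Hy. assert (I01 y) by (unfold I01 in *; lra).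
    destruct (proj2 (proj2 Gg) y H0) as [x [Hx Ex]]. exists x; split; auto.
    split.
    + apply (good_le_rev g); auto. lra.
    + apply (good_le_rev g); auto. lra.
Qed.

Lemma stab_shift g : stab G a b g -> exists n, forall k, g (o k) = o (k+n)%Z.
Proof.
  intros Hs. destruct (stab_fix g Hs) as [Ga Gb]. destruct Hs as [Hg _].
  pose proof (CB_G g Hg _ _ _ _ HC) as C2. rewrite Ga, Gb in C2.
  pose proof (BI_ab _ _ _ B).
  destruct (R14_all _ _ _ _ HC _ _ _ C2) as [[R|R]|[_ [_ [n Hn]]]]; try lra.
  exists n; auto.
Qed.

Lemma o_inj j k : o j = o k -> j = k.
Proof.
  intros E. destruct (Z.lt_trichotomy j k) as [H|[H|H]]; auto.
  pose proof (BI_mono _ _ _ _ _ B H); lra. pose proof (BI_mono _ _ _ _ _ B H); lra.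
Qed.

Definition sh (g : R -> R) : Z := epsilon (inhabits 0%Z) (fun n => forall k, g (o k) = o (k+n)%Z).

Lemma sh_spec g : stab G a b g -> forall k, g (o k) = o (k + sh g)%Z.
Proof. intros H. unfold sh. apply epsilon_spec. apply stab_shift; auto. Qed.

Lemma sh_unique g n : stab G a b g -> (forall k, g (o k) = o (k+n)%Z) -> sh g = n.
Proof.
  intros H Hn. pose proof (sh_spec g H 0). rewrite Hn in H0. apply o_inj in H0. lia.
Qed.

Definition tau0 (g : R -> R) : R := IZR (sh g).

Lemma tau0_rel : rel_translation G a b tau0.
Proof.
  pose proof (BI_ab _ _ _ B).
  split; [|split].
  - intros g h k Hg Hh Hk E. unfold tau0. rewrite <- plus_IZR. f_equal.
    apply sh_unique; auto. intros j. rewrite E. 2: eapply BI_o; eauto.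
    rewrite (sh_spec h Hh), (sh_spec g Hg). f_equal; lia.
  - intros g Hg. unfold tau0. split.
    + intros E. apply eq_IZR in E. exists (o 0%Z). split. apply BI_in; auto.
      rewrite sh_spec; auto. rewrite E. f_equal.
    + intros [x [Hx Ex]]. destruct (Z.eq_dec (sh g) 0) as [E|N]. rewrite E; auto.
      exfalso. apply (shift_nf g a b o (sh g) (G_good g (proj1 Hg)) B (sh_spec g Hg) N x Hx Ex).
  - intros g Hg. unfold tau0. split.
    + intros Hp. apply lt_0_IZR in Hp.
      apply (shift_pos g a b o (sh g) (G_good g (proj1 Hg)) B (sh_spec g Hg)); lia.
    + intros Hall. apply IZR_lt. destruct (Z.lt_ge_cases 0 (sh g)); auto.
      pose proof (Hall (o 0%Z) (BI_in _ _ _ 0 B)). rewrite sh_spec in H1; auto.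
      pose proof (BI_le _ _ _ (0 + sh g) 0 B ltac:(lia)). lra.
Qed.

Lemma tau_all tau : rel_translation G a b tau ->
  exists alpha : R, forall y, (exists g, stab G a b g /\ tau g = y) <-> exists n : Z, y = alpha * IZR n.
Proof.
  intros [Hm [Hk Hp]].
  destruct (CB_TE _ _ _ _ HC) as [t [Gt [Ta [Tb To]]]].
  pose proof (G_good t Gt) as gt.
  pose proof (BI_a _ _ _ B) as Ia. pose proof (BI_b _ _ _ B) as Ib.
  set (P := fun n => Fz t n).
  assert (GP : forall n, G (P n)) by (intros; apply G_Fz_gen; auto; apply G_inv; auto).
  assert (Pa : forall n, P n a = a) by (intros; apply Fz_fix; auto).
  assert (Pb : forall n, P n b = b) by (intros; apply Fz_fix; auto).
  assert (SP : forall n, stab G a b (P n)) by (intros; apply stab_of; auto).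
  assert (Po : forall n k, P n (o k) = o (k + n)%Z).
  { intros n. induction n using Z.peano_ind; intros k.
    - unfold P. rewrite Z.add_0_r. reflexivity.
    - unfold P in *. rewrite <- Z.add_1_r, Fz_succ, IHn, To; auto. f_equal; lia. eapply BI_o; eauto.
    - unfold P in *. rewrite <- Z.sub_1_r, Fz_pred, IHn; auto. 2: eapply BI_o; eauto.
      apply inv_unique; auto. eapply BI_o; eauto. rewrite To. f_equal; lia. }
  assert (St : stab G a b t) by (apply stab_of; auto).
  assert (Tid : tau (P 0%Z) = 0).
  { pose proof (Hm (P 0%Z) (P 0%Z) (P 0%Z) (SP 0%Z) (SP 0%Z) (SP 0%Z) (fun x _ => eq_refl)). lra. }
  assert (TP : forall n, tau (P n) = IZR n * tau t).
  { intros n. induction n using Z.peano_ind.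
    - rewrite Tid. simpl; lra.
    - rewrite <- Z.add_1_r, plus_IZR.
      rewrite (Hm t (P n) (P (n+1)%Z) St (SP n) (SP (n+1)%Z)). rewrite IHn; lra.
      intros x Hx. unfold P. rewrite Fz_succ; auto.
    - rewrite <- Z.sub_1_r, minus_IZR.
      assert (tau (P n) = tau t + tau (P (n-1)%Z)).
      { apply Hm; auto. intros x Hx. unfold P. rewrite <- (Fz_succ t (n-1)); auto. f_equal; lia. }
      lra. }
  exists (tau t). intros y. split.
  - intros [g [Hg Ey]]. subst y. exists (sh g).
    set (n := sh g).
    set (h := fun x => P (- n)%Z (g x)).
    assert (Gh : G h) by (unfold h; apply G_comp; [apply GP | exact (proj1 Hg)]).
    destruct (stab_fix g Hg) as [Ga Gb].
    assert (Sh : stab G a b h) by (apply stab_of; auto; unfold h; [rewrite Ga|rewrite Gb]; auto).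
    assert (Th : tau h = 0).
    { apply Hk; auto. exists (o 0%Z). split. apply BI_in; auto.
      unfold h. rewrite sh_spec, Po; auto. f_equal. fold n; lia. }
    assert (E : tau g = tau (P n) + tau h).
    { apply Hm; auto. intros x Hx. unfold h, P. rewrite Fz_cancel; auto. apply good_I01; auto.
      apply G_good; exact (proj1 Hg). }
    rewrite E, Th, TP. lra.
  - intros [n ->]. exists (P n). split; auto. rewrite TP; lra.
Qed.

End TR.

Lemma tot_rat : totally_rational G.
Proof.
  intros a b H. destruct (succ_block a b H) as [i [o C]].
  split.
  - exists (tau0 o). apply (tau0_rel a b i o C).
  - intros tau Ht. apply (tau_all a b i o C tau Ht).
Qed.

End FSys.

Theorem propositionp (I : Type) (f : I -> R -> R) (p q u : I -> R) :
  fundamental_system f p q u ->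
  without_linked_fixed_points (in_gen f) /\ totally_rational (in_gen f).
Proof.
  intros FS. split. apply (no_linked I f p q u FS). apply (tot_rat I f p q u FS).
Qed.
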